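(* Let $G=(U,V,E)$ be a bipartite graph with $|U|=|V|=N$ in which every vertex of $U$ has at least one neighbor, and run the matching algorithm on $G$. Let $i\ge 0$ be an iteration index at which $|M(i)|<N$, let $l$ be an integer, and let $v_0\in D_l(i)$ and $u\in U$ with $(u,v_0)\in M(i)$. Then $n_u\subseteq D_{l-1}(i)$.
   Context: Matching algorithm. For $u\in U$ let $n_u=\{v\in V:(u,v)\in E\}$. The algorithm maintains a matching $M\subseteq E$ (initially empty) and an integer value $h_v$ for each $v\in V$ (initially $0$). A vertex is free if no edge of $M$ is incident to it. One iteration: choose any free $u\in U$ (arbitrary choice); choose $j\in\arg\min_{v\in n_u}h_v$ (ties broken arbitrarily); if some $u_{\rm old}\in U$ has $(u_{\rm old},j)\in M$, remove $(u_{\rm old},j)$ from $M$ (so $u_{\rm old}$ becomes free); add $(u,j)$ to $M$; increase $h_j$ by $1$. Iterations are repeated while $|M|<N$ and the algorithm terminates when $|M|=N$. $M(i)$ and $h_v(i)$ denote the matching and the values after the $i$-th iteration. For an integer $l$, $D_l(i)=\{v\in V: h_v(i)\ge l\}$. *)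

(* Defs.v *)
From mathcomp Require Import all_boot all_order all_algebra.
Set Implicit Arguments. Unset Strict Implicit. Unset Printing Implicit Defensive.

Definition freeU (U V : finType) (M : {set U * V}) (u : U) : bool :=
  [forall v, (u, v) \notin M].

Definition alg_step (U V : finType) (E : U -> V -> bool)
  (M : {set U * V}) (h : V -> nat) (M' : {set U * V}) (h' : V -> nat) : Prop :=
  exists u : U, freeU M u /\
  exists j : V, E u j /\ (forall v, E u v -> h j <= h v) /\
    M' = (u, j) |: [set p in M | p.2 != j] /\
    (forall v, h' v = if v == j then (h v).+1 else h v).

Definition D (V : finType) (h : V -> nat) (l : int) : {set V} :=
  [set v | (l <= (h v)%:Z)%R].

(* Main.v *)
Require Import Defs.
From mathcomp Require Import all_boot all_order all_algebra.
From mathcomp Require Import zify.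

Lemma inv_run (U V : finType) (E : U -> V -> bool)
  (M : nat -> {set U * V}) (h : nat -> V -> nat)
  (hM0 : M 0 = set0) (i : nat)
  (hrun : forall k, k < i -> alg_step E (M k) (h k) (M k.+1) (h k.+1)) :
  forall k, k <= i -> forall u w v, (u, w) \in M k -> E u v -> h k w <= (h k v).+1.
Proof.
elim=> [|k IH] hk u w v.
  by rewrite hM0 inE.
have [u1 [_ [j [Ej [hmin [eM eh]]]]]] := hrun k hk.
have Hk := IH (ltnW hk).
have mono : forall x, h k x <= h k.+1 x by move=> x; rewrite eh; case: (x == j).
rewrite eM !inE => /orP [/eqP [-> ->]|/andP [Hin /= Hne]] Ev.
  rewrite eh eqxx ltnS; apply: leq_trans (hmin _ Ev) (mono v).
rewrite eh (negbTE Hne).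
apply: leq_trans (Hk _ _ _ Hin Ev) _; rewrite ltnS; exact: mono.
Qed.

Theorem mainTheorem5 (U V : finType) (N : nat) (E : U -> V -> bool)
  (hU : #|U| = N) (hV : #|V| = N)
  (hdeg : forall u : U, exists v : V, E u v)
  (M : nat -> {set U * V}) (h : nat -> V -> nat)
  (hM0 : M 0 = set0) (hh0 : forall v, h 0 v = 0)
  (i : nat)
  (hrun : forall k, k < i -> #|M k| < N /\ alg_step E (M k) (h k) (M k.+1) (h k.+1))
  (hi : #|M i| < N)
  (l : int) (v0 : V) (u : U)
  (hv0 : v0 \in D (h i) l) (huv0 : (u, v0) \in M i) :
  forall v, E u v -> v \in D (h i) (l - 1)%R.
Proof.
move=> v Ev.
have H := @inv_run U V E M h hM0 i (fun k hk => (hrun k hk).2) i (leqnn i) u v0 v huv0 Ev.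
move: hv0; rewrite /D !inE => hl.
lia.
Qed.
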